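(* There exist $a_1\ge1$ and $b_1\in(0,1)$, depending only on $\alpha$, such that for every $a>a_1$ and every $b\in(0,b_1)$ the following holds: if $p,q\in\mathbb H$ satisfy $p\notin B(q,r_q)$ and $q\notin B(p,r_p)$, then at most one of $p,q$ belongs to $\mathcal T(a,b)$.
   Context: $\mathbb H=\mathbb R^3$, $p=(x_p,y_p,z_p)$, $\rho_p=\sqrt{x_p^2+y_p^2}$, group law $(x,y,z)\cdot(x',y',z')=(x+x',y+y',z+z'+\tfrac12(xy'-yx'))$, dilations $\delta_\lambda(x,y,z)=(\lambda x,\lambda y,\lambda^2z)$. Fix $\alpha>0$ such that $d_\alpha(p,q)=\inf\{r>0:\delta_{1/r}(p^{-1}\cdot q)\in B_\alpha\}$ is a distance, $B_\alpha$ the closed Euclidean ball of radius $\alpha$ at $0$. $B(p,r)=\{q:d_\alpha(q,p)\le r\}$, $r_p=d_\alpha(0,p)$. $\mathcal T(a,b)=\{p: z_p<-a,\ \rho_p<b\}$. *)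

(* Defs.v *)
From Stdlib Require Import Reals Lra ClassicalEpsilon.
Open Scope R_scope.

(* Heisenberg group H = R^3 with exponential coordinates *)
Record Hpt := mkH { hx : R; hy : R; hz : R }.

Definition hmul (p q : Hpt) : Hpt :=
  mkH (hx p + hx q) (hy p + hy q)
      (hz p + hz q + / 2 * (hx p * hy q - hy p * hx q)).

Definition hinv (p : Hpt) : Hpt := mkH (- hx p) (- hy p) (- hz p).

Definition h0 : Hpt := mkH 0 0 0.

Definition dil (l : R) (p : Hpt) : Hpt := mkH (l * hx p) (l * hy p) (l * l * hz p).

Definition in_Balpha (alpha : R) (p : Hpt) : Prop :=
  hx p ^ 2 + hy p ^ 2 + hz p ^ 2 <= alpha ^ 2.

Definition dset (alpha : R) (p q : Hpt) (r : R) : Prop :=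
  r > 0 /\ in_Balpha alpha (dil (/ r) (hmul (hinv p) q)).

Definition is_inf (S : R -> Prop) (m : R) : Prop :=
  (forall r, S r -> m <= r) /\ (forall m', (forall r, S r -> m' <= r) -> m' <= m).

Definition d_alpha (alpha : R) (p q : Hpt) : R :=
  epsilon (inhabits 0) (fun m => is_inf (dset alpha p q) m).

Definition is_distance (d : Hpt -> Hpt -> R) : Prop :=
  (forall p q, 0 <= d p q) /\
  (forall p q, d p q = 0 <-> p = q) /\
  (forall p q, d p q = d q p) /\
  (forall p q s, d p s <= d p q + d q s).

Definition ball (alpha : R) (p : Hpt) (r : R) (q : Hpt) : Prop :=
  d_alpha alpha q p <= r.

Definition r_of (alpha : R) (p : Hpt) : R := d_alpha alpha h0 p.

Definition rho (p : Hpt) : R := sqrt (hx p ^ 2 + hy p ^ 2).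

Definition inT (a b : R) (p : Hpt) : Prop := hz p < - a /\ rho p < b.

(* Main.v *)
Require Import Defs.
From Stdlib Require Import Reals Lra Psatz ClassicalEpsilon.
Open Scope R_scope.

Lemma inf_exists (S : R -> Prop) : (exists r, S r) -> (forall r, S r -> 0 < r) ->
  exists m, is_inf S m.
Proof.
  intros [r0 Hr0] Hpos.
  destruct (completeness (fun x => S (- x))) as [l [Hub Hleast]].
  - exists 0. intros x Hx. specialize (Hpos _ Hx). lra.
  - exists (- r0). now rewrite Ropp_involutive.
  - exists (- l). split.
    + intros r Hr. assert (- r <= l). { apply Hub. now rewrite Ropp_involutive. } lra.
    + intros m' Hm'. assert (l <= - m'). { apply Hleast. intros x Hx. specialize (Hm' _ Hx). lra. } lra.
Qed.

Lemma d_alpha_inf alpha p q : (exists r, dset alpha p q r) -> is_inf (dset alpha p q) (d_alpha alpha p q).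
Proof.
  intros H. unfold d_alpha. apply epsilon_spec. apply inf_exists; auto.
  intros r [Hr _]; lra.
Qed.

Lemma dset_ne alpha p q : 0 < alpha -> exists r, dset alpha p q r.
Proof.
  intros Ha. set (v := hmul (hinv p) q).
  set (N := hx v ^ 2 + hy v ^ 2 + hz v ^ 2).
  assert (HN : 0 <= N) by (unfold N; nra).
  exists ((alpha + 1 + N) / alpha). split.
  - apply Rdiv_lt_0_compat; lra.
  - unfold in_Balpha, dil; cbn [hx hy hz].
    rewrite Rinv_div. set (u := alpha / (alpha + 1 + N)).
    assert (Hu0 : 0 < u) by (apply Rdiv_lt_0_compat; lra).
    assert (Hu1 : u <= 1). { unfold u. apply Rmult_le_reg_r with (alpha+1+N). lra.
      unfold Rdiv. rewrite Rmult_assoc, Rinv_l by lra. lra. }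
    assert (Hu2 : u * (alpha + 1 + N) = alpha). { unfold u. field. lra. }
    assert (u * u * N <= alpha ^ 2).
    { assert (u * u * N <= u * u * (alpha + 1 + N) * (alpha + 1 + N)).
      { replace (u * u * (alpha + 1 + N) * (alpha + 1 + N)) with ((u*u) * ((alpha + 1 + N) * (alpha + 1 + N))) by ring.
        apply Rmult_le_compat_l; nra. }
      replace (u * u * (alpha + 1 + N) * (alpha + 1 + N)) with ((u * (alpha + 1 + N))^2) in H by ring.
      rewrite Hu2 in H. exact H. }
    unfold N in H.
    assert (u*u*u*u * hz v ^2 <= u*u*hz v ^2).
    { assert (0 <= hz v ^2) by nra. assert (u*u <= 1) by nra. nra. }
    replace ((u * hx v) ^ 2 + (u * hy v) ^ 2 + (u * u * hz v) ^ 2) with (u*u*(hx v ^2 + hy v ^2) + u*u*u*u*hz v ^2) by ring.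
    fold v. lra.
Qed.

Lemma inf_mono (A B : R -> Prop) ma mb : is_inf A ma -> is_inf B mb ->
  (forall r, A r -> B r) -> mb <= ma.
Proof.
  intros [HA1 HA2] [HB1 HB2] Hs. apply HA2. intros r Hr. apply HB1, Hs, Hr.
Qed.

Lemma key alpha a b p q : 0 < alpha -> a > 1 + 9 / alpha -> 0 < b < 1/2 ->
  inT a b p -> inT a b q -> hz q <= hz p ->
  d_alpha alpha p q <= r_of alpha q.
Proof.
  intros Ha Haa Hb [Hzp Hrp] [Hzq Hrq] Hle.
  unfold r_of.
  apply (inf_mono (dset alpha h0 q) (dset alpha p q)).
  - apply d_alpha_inf, dset_ne; auto.
  - apply d_alpha_inf, dset_ne; auto.
  - intros r [Hr Hin]. split; [exact Hr|].
    unfold in_Balpha, dil, hmul, hinv, h0 in *; simpl in *.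
    set (u := / r) in *.
    assert (Hu : 0 < u) by (apply Rinv_0_lt_compat; lra).
    unfold rho in Hrp, Hrq.
    assert (Hp2 : hx p ^2 + hy p ^2 < b^2).
    { apply sqrt_lt_0_alt. rewrite sqrt_pow2 by lra. exact Hrp. }
    assert (Hq2 : hx q ^2 + hy q ^2 < b^2).
    { apply sqrt_lt_0_alt. rewrite sqrt_pow2 by lra. exact Hrq. }
    set (w := - hz p + hz q + / 2 * (- hx p * hy q - - hy p * hx q)).
    set (hh := (- hx p + hx q) ^2 + (- hy p + hy q)^2).
    set (Z := - hz q).
    assert (Hah : 9 / alpha * alpha = 9) by (field; lra).
    assert (Ha9 : a * alpha > 9) by nra.
    assert (Hapos : a > 1). { assert (0 < 9/alpha) by (apply Rdiv_lt_0_compat; lra). lra. }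
    assert (HZ : Z > a) by (unfold Z; lra).
    assert (Hcs : (hy p * hx q - hx p * hy q)^2 <= (hx p ^2 + hy p ^2)*(hx q ^2 + hy q ^2)).
    { replace ((hx p ^2 + hy p ^2)*(hx q ^2 + hy q ^2)) with ((hy p * hx q - hx p * hy q)^2 + (hx p * hx q + hy p * hy q)^2) by ring. pose proof (pow2_ge_0 (hx p * hx q + hy p * hy q)). lra. }
    assert (Hb2 : b^2 < 1/4) by nra.
    assert (Hcs2 : (hy p * hx q - hx p * hy q)^2 < 1).
    { assert (0 <= hx p ^2 + hy p ^2) by nra. assert (0 <= hx q ^2 + hy q ^2) by nra.
      assert ((hx p ^2 + hy p ^2)*(hx q ^2 + hy q ^2) <= (1/4) * (1/4)).
      { apply Rmult_le_compat; lra. } lra. }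
    assert (Hc : -1 < hy p * hx q - hx p * hy q < 1) by nra.
    assert (Hw : w ^ 2 <= (Z - a/2)^2).
    { assert (- (Z - a/2) <= w <= Z - a/2).
      { unfold w, Z. lra. }
      nra. }
    assert (Hhh : hh < 1).
    { assert (hh + ((hx p + hx q)^2 + (hy p + hy q)^2) = 2*(hx p ^2 + hy p ^2) + 2*(hx q ^2 + hy q ^2)) by (unfold hh; ring).
      pose proof (pow2_ge_0 (hx p + hx q)). pose proof (pow2_ge_0 (hy p + hy q)). lra. }
    assert (Hh0 : 0 <= hh) by (unfold hh; pose proof (pow2_ge_0 (- hx p + hx q)); pose proof (pow2_ge_0 (- hy p + hy q)); lra).
    enough (Hgoal : u*u*hh + u*u*u*u*w^2 <= alpha^2).
    { eapply Rle_trans;[right|eapply Rle_trans;[exact Hgoal|right]]; unfold hh; ring. }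
    assert (Hin' : u*u*u*u*Z^2 <= alpha^2).
    { assert (0 <= u*u*(hx q ^2 + hy q ^2)) by nra.
      assert (Hin2 : u*u*(hx q ^2 + hy q ^2) + u*u*u*u*Z^2 <= alpha^2).
      { eapply Rle_trans; [|exact Hin]. right. unfold Z; ring. }
      lra. }
    assert (Hu2 : 0 < u*u) by nra.
    assert (Hu4 : 0 < u*u*u*u) by nra.
    assert (Hw' : u*u*u*u*w^2 <= u*u*u*u*(Z - a/2)^2) by (apply Rmult_le_compat_l; lra).
    destruct (Rle_lt_dec 8 (u*u*Z*a)) as [HA|HB].
    +
      assert (u*u*hh <= u*u) by nra.
      assert (8 * (u*u) <= u*u*(u*u*Z*a)) by nra.
      assert (u*u*u*u*(Z - a/2)^2 <= u*u*u*u*Z^2 - (3/4)*(u*u*(u*u*Z*a))).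
      { assert (a*a/4 <= a*Z/4) by nra. nra. }
      lra.
    +
      assert (HuZ : u*u*Z < 8/a).
      { apply Rmult_lt_reg_r with a. lra. replace (8/a*a) with 8 by (field; lra). lra. }
      assert (Hu8 : u*u < 8/(a*a)).
      { apply Rmult_lt_reg_r with (Z*a). nra. 
        replace (8/(a*a)*(Z*a)) with (8*Z/a) by (field; lra).
        assert (8 < 8 * Z / a). { apply Rmult_lt_reg_r with a. lra. replace (8*Z/a*a) with (8*Z) by (field; lra). lra. }
        lra. }
      assert (H0Z : 0 <= u*u*Z) by nra.
      assert (Hsq : (u*u*Z)^2 < 64/(a*a)).
      { replace (64/(a*a)) with ((8/a)^2) by (field; lra). nra. }
      assert (u*u*u*u*(Z - a/2)^2 <= u*u*u*u*Z^2).
      { assert ((Z-a/2)^2 <= Z^2) by nra. nra. }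
      assert (u*u*hh <= u*u) by nra.
      assert (72/(a*a) <= alpha^2).
      { assert (9 < a*alpha) by lra.
        assert (81 < (a*alpha)^2) by nra.
        apply Rmult_le_reg_r with (a*a). nra.
        replace (72/(a*a)*(a*a)) with 72 by (field; lra). nra. }
      assert (u*u*u*u*Z^2 = (u*u*Z)^2) by ring.
      assert (64/(a*a) + 8/(a*a) = 72/(a*a)) by (field; lra).
      lra.
Qed.

Theorem lemma2p4 (alpha : R) (Halpha : 0 < alpha)
  (Hdist : is_distance (d_alpha alpha)) :
  exists a1 b1 : R, 1 <= a1 /\ 0 < b1 < 1 /\
    forall a b : R, a > a1 -> 0 < b < b1 ->
    forall p q : Hpt,
      ~ ball alpha q (r_of alpha q) p ->
      ~ ball alpha p (r_of alpha p) q ->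
      ~ (inT a b p /\ inT a b q).
Proof.
  assert (H9 : 0 < 9 / alpha) by (apply Rdiv_lt_0_compat; lra).
  exists (1 + 9 / alpha), (1/2). split; [lra|]. split; [lra|].
  intros a b Ha Hb p q H1 H2 [Hp Hq].
  destruct (Rle_lt_dec (hz q) (hz p)) as [Hle|Hlt].
  - apply H1. unfold ball. apply key with a b; auto.
  - apply H2. unfold ball. apply key with a b; auto. lra.
Qed.
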